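(* Let $G_1,G_2$ be $q$-cut-dense graphs. Then $G_1\cup G_2$ is $\frac{q|V(G_1)\cap V(G_2)|}{4|V(G_1)\cup V(G_2)|}$-cut-dense.
   Context: A graph $G$ is $q$-cut-dense if for every partition $V(G)=A\cup B$ into disjoint sets, $e_G(A,B)\ge q|A||B|$, where $e_G(A,B)$ counts edges with one endpoint in $A$ and one in $B$. $G_1\cup G_2$ is the graph with vertex set $V(G_1)\cup V(G_2)$ and edge set $E(G_1)\cup E(G_2)$. *)

(* Defs.v *)
From mathcomp Require Import all_boot all_order all_algebra.
Set Implicit Arguments. Unset Strict Implicit. Unset Printing Implicit Defensive.
Import Order.TTheory GRing.Theory Num.Theory.

(* Using a common ambient type lets us speak of V(G1) ∩ V(G2), G1 ∪ G2. *)
Record sgraph (T : finType) := SGraph { gV : {set T}; gE : {set {set T}} }.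

Definition is_simple_graph (T : finType) (G : sgraph T) : Prop :=
  forall e, e \in gE G -> e \subset gV G /\ #|e| = 2.

Definition graph_union (T : finType) (G1 G2 : sgraph T) : sgraph T :=
  SGraph (gV G1 :|: gV G2) (gE G1 :|: gE G2).

Definition e_between (T : finType) (G : sgraph T) (A B : {set T}) : nat :=
  #|[set e in gE G | (e :&: A != set0) && (e :&: B != set0)]|.

Definition cut_dense (R : realFieldType) (q : R) (T : finType) (G : sgraph T) : Prop :=
  forall A B : {set T}, A :&: B = set0 -> A :|: B = gV G ->
    (q * (#|A|%:R) * (#|B|%:R) <= (e_between G A B)%:R)%R.

(* Main.v *)
Require Import Defs.
From mathcomp Require Import all_boot all_order all_algebra.
From mathcomp Require Import zify ring lra.
Import Order.TTheory GRing.Theory Num.Theory.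
Local Open Scope ring_scope.

Lemma e_between_sub (T : finType) (G H : sgraph T) (A B A' B' : {set T}) :
  gE G \subset gE H -> A \subset A' -> B \subset B' ->
  (e_between G A B <= e_between H A' B')%N.
Proof.
move=> sE sA sB; apply: subset_leq_card; apply/subsetP => e.
rewrite !inE => /andP[eG /andP[eA eB]].
rewrite (subsetP sE _ eG) /=; apply/andP; split.
- by apply: contra eA => /eqP h; rewrite -subset0 -h setIS.
- by apply: contra eB => /eqP h; rewrite -subset0 -h setIS.
Qed.

Lemma piece (R : realFieldType) (q : R) (T : finType) (G H : sgraph T) (A B : {set T}) :
  cut_dense q G -> gE G \subset gE H -> gV G \subset gV H ->
  A :&: B = set0 -> A :|: B = gV H ->
  q * (#|A :&: gV G|%:R) * (#|B :&: gV G|%:R) <= (e_between H A B)%:R.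
Proof.
move=> cd sE sV AB UAB.
apply: (le_trans (cd _ _ _ _)).
- by rewrite setIACA setIid AB set0I.
- by rewrite -[RHS](setIidPr sV) -UAB setIUl.
rewrite ler_nat. apply: e_between_sub => //; exact: subsetIl.
Qed.

Lemma natkey (T : finType) (V1 V2 A B : {set T}) :
  A :&: B = set0 -> A :|: B = V1 :|: V2 ->
  (#|V1 :&: V2| * #|A| * #|B| <= #|V1 :|: V2| * 2 *
     (#|A :&: V1| * #|B :&: V1| + #|A :&: V2| * #|B :&: V2|))%N.
Proof.
move=> AB UAB.
set I := V1 :&: V2. set n := #|V1 :|: V2|.
have hk : #|I| = (#|A :&: I| + #|B :&: I|)%N.
  rewrite -cardsUI -setIUl UAB setIACA setIid AB set0I cards0 addn0.
  by rewrite (setIidPr (_ : I \subset V1 :|: V2)) // /I subIset // subsetUl.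
have hA : (#|A| <= n)%N by rewrite /n -UAB subset_leq_card // subsetUl.
have hB : (#|B| <= n)%N by rewrite /n -UAB subset_leq_card // subsetUr.
have sub1 : forall X : {set T}, (#|X| <= #|X :&: V1| + #|X :&: V2|)%N ->
   True by [].
have cov : forall X : {set T}, X \subset V1 :|: V2 ->
   (#|X| <= #|X :&: V1| + #|X :&: V2|)%N.
  move=> X sX; rewrite -{1}(setIidPl sX) setIUr; exact: leq_card_setU.
have cA : (#|A| <= #|A :&: V1| + #|A :&: V2|)%N by apply: cov; rewrite -UAB subsetUl.
have cB : (#|B| <= #|B :&: V1| + #|B :&: V2|)%N by apply: cov; rewrite -UAB subsetUr.
have i1 : forall X, (#|X :&: I| <= #|X :&: V1|)%N.
  by move=> X; apply: subset_leq_card; apply: setIS; exact: subsetIl.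
have i2 : forall X, (#|X :&: I| <= #|X :&: V2|)%N.
  by move=> X; apply: subset_leq_card; apply: setIS; exact: subsetIr.
have iA1 := i1 A; have iA2 := i2 A; have iB1 := i1 B; have iB2 := i2 B.
move: hk cA cB iA1 iA2 iB1 iB2 hA hB.
move: #|I| #|A| #|B| #|A :&: I| #|B :&: I| #|A :&: V1| #|A :&: V2|
  #|B :&: V1| #|B :&: V2| n => k a b x y a1 a2 b1 b2 m.
move=> -> ca cb xa1 xa2 yb1 yb2 am bm.
have [hx|hy] := leqP (x + y) (2 * x).
- (* k*b <= 2x(b1+b2) <= 2(P1+P2) *)
  have h1 : ((x + y) * b <= 2 * (a1 * b1 + a2 * b2))%N.
    apply: (leq_trans (leq_mul hx (leqnn b))).
    rewrite -mulnA leq_mul2l /=.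
    apply: (leq_trans (leq_mul (leqnn x) cb)); rewrite mulnDr.
    by apply: leq_add; apply: leq_mul.
  have := leq_mul am h1; nia.
- have h1 : ((x + y) * a <= 2 * (a1 * b1 + a2 * b2))%N.
    apply: (leq_trans (leq_mul (_ : x + y <= 2 * y)%N (leqnn a))); first lia.
    rewrite -mulnA leq_mul2l /=.
    apply: (leq_trans (leq_mul (leqnn y) ca)); rewrite mulnDr.
    by apply: leq_add; rewrite mulnC; apply: leq_mul.
  have := leq_mul bm h1; nia.
Qed.

Theorem lemma3p8 (R : realFieldType) (q : R) (T : finType) (G1 G2 : sgraph T) :
  is_simple_graph G1 -> is_simple_graph G2 ->
  cut_dense q G1 -> cut_dense q G2 ->
  cut_dense (q * (#|gV G1 :&: gV G2|%:R) / (4 * (#|gV G1 :|: gV G2|%:R)))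
            (graph_union G1 G2).
Proof.
move=> _ _ c1 c2 A B AB UAB.
have p1 := @piece R q T G1 (graph_union G1 G2) A B c1 (subsetUl _ _) (subsetUl _ _) AB UAB.
have p2 := @piece R q T G2 (graph_union G1 G2) A B c2 (subsetUr _ _) (subsetUr _ _) AB UAB.
have nk := @natkey T (gV G1) (gV G2) A B AB UAB.
move: p1 p2 nk; rewrite /=.
set e := e_between _ A B.
move: #|gV G1 :&: gV G2| #|A| #|B| #|A :&: gV G1| #|A :&: gV G2|
  #|B :&: gV G1| #|B :&: gV G2| #|gV G1 :|: gV G2| => k a b a1 a2 b1 b2 n.
move=> p1 p2 nk.
have e0 : 0 <= (e%:R : R) by [].
have [q0|q0] := leP q 0.
  apply: le_trans e0.
  rewrite -!mulrA mulr_le0_ge0 // !mulr_ge0 // invr_ge0 mulr_ge0 //.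
have [->|n0] := eqVneq n 0%N.
  by rewrite mulr0 invr0 mulr0 !mul0r.
have nR : (0 : R) < n%:R by rewrite ltr0n lt0n.
have nkR : (k%:R * a%:R * b%:R : R) <= n%:R * 2 * (a1%:R * b1%:R + a2%:R * b2%:R).
  by rewrite -!natrM -natrD -!natrM ler_nat.
have : q * (k%:R * a%:R * b%:R) <= q * (n%:R * 2 * (a1%:R * b1%:R + a2%:R * b2%:R)).
  by rewrite ler_pM2l.
move=> h.
have -> : q * k%:R / (4 * n%:R) * a%:R * b%:R = q * (k%:R * a%:R * b%:R) / (4 * n%:R).
  by ring.
rewrite ler_pdivrMr ?mulr_gt0 //.
apply: (le_trans h).
have : q * (a1%:R * b1%:R + a2%:R * b2%:R) <= 2 * e%:R.
  by rewrite mulrDr !mulrA; lra.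
move=> h2.
have : 0 <= n%:R * (2 * e%:R - q * (a1%:R * b1%:R + a2%:R * b2%:R)) :> R.
  by apply: mulr_ge0; [exact: ltW | lra].
move=> h3. nra.
Qed.
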